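(* For every $n\ge0$, in $\mathbb{Z}[x,q]$ modulo the ideal generated by $q^2-1$, $$L_n(x)+q\bar L_n(x)\equiv r_n(x,q),\qquad e_n(x)+q\,o_n(x)\equiv p_n(x,q).$$
   Context: $e(n,k)$ (resp. $o(n,k)$) is the number of $k$-element subsets of $\{1,\dots,n\}$ with even (resp. odd) sum, the empty set counting as even; $e_n(x)=\sum_k e(n,k)x^k$, $o_n(x)=\sum_k o(n,k)x^k$. Losanitsch's triangle $(L(n,k))$ is defined by $L(0,k)=[k=0]$, $L(1,k)=[k\le 1]$ for $k\ge0$, $L(n,k)=0$ for $k<0$, and for $n\ge 2$: $L(n,k)=L(n-2,k)+\binom{n-2}{k-1}+L(n-2,k-2)$ (with $\binom{m}{j}=0$ for $j<0$ or $j>m$); $\bar L(n,k)=\binom nk-L(n,k)$; $L_n(x)=\sum_{k=0}^nL(n,k)x^k$, $\bar L_n(x)=\sum_{k=0}^n\bar L(n,k)x^k$. $\begin{bmatrix} n\\ k\end{bmatrix}_q$ is the Gaussian binomial coefficient, $r_n(x,q)=\sum_{k=0}^n\begin{bmatrix} n\\ k\end{bmatrix}_q x^k$ (Rogers–Szegő polynomial) and $p_n(x,q)=\prod_{j=1}^n(1+q^jx)$ ($q$-Newton polynomial). *)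

(* Defs.v *)
From HB Require Import structures.
From mathcomp Require Import all_boot all_order all_algebra.
Set Implicit Arguments. Unset Strict Implicit. Unset Printing Implicit Defensive.
Import Order.TTheory GRing.Theory Num.Theory.
Local Open Scope ring_scope.

(* Z[x,q] is represented as {poly {poly int}}: outer variable x, inner variable q. *)

(* e(n,k), o(n,k): k-subsets of {1,...,n} with even/odd sum.
   The element i : 'I_n represents the integer i+1. *)
Definition e_cnt (n k : nat) : nat :=
  #|[set A : {set 'I_n} | (#|A| == k) && ~~ odd (\sum_(i in A) i.+1)%N]|.
Definition o_cnt (n k : nat) : nat :=
  #|[set A : {set 'I_n} | (#|A| == k) && odd (\sum_(i in A) i.+1)%N]|.

(* Losanitsch's triangle, k >= 0 (terms with negative index are 0). *)
Fixpoint Los (n k : nat) {struct n} : nat :=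
  match n with
  | 0 => (k == 0)%N
  | 1 => (k <= 1)%N
  | m.+2 => (Los m k + (if k is k'.+1 then 'C(m, k') else 0)
             + (if k is k''.+2 then Los m k'' else 0))%N
  end.

Definition Losbar (n k : nat) : int := ('C(n, k))%:Z - (Los n k)%:Z.

Fixpoint qbinom (n k : nat) : {poly int} :=
  match n, k with
  | _, 0 => 1
  | 0, _.+1 => 0
  | m.+1, j.+1 => qbinom m j + 'X^(j.+1) * qbinom m j.+1
  end.

Definition qv : {poly {poly int}} := ('X : {poly int})%:P.

Definition e_poly (n : nat) : {poly {poly int}} :=
  \sum_(k < n.+1) (e_cnt n k)%:R * 'X^k.
Definition o_poly (n : nat) : {poly {poly int}} :=
  \sum_(k < n.+1) (o_cnt n k)%:R * 'X^k.
Definition L_poly (n : nat) : {poly {poly int}} :=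
  \sum_(k < n.+1) (Los n k)%:R * 'X^k.
Definition Lbar_poly (n : nat) : {poly {poly int}} :=
  \sum_(k < n.+1) (Losbar n k)%:~R * 'X^k.
Definition r_poly (n : nat) : {poly {poly int}} :=
  \sum_(k < n.+1) (qbinom n k)%:P * 'X^k.
Definition p_poly (n : nat) : {poly {poly int}} :=
  \prod_(1 <= j < n.+1) (1 + qv ^+ j * 'X).

Definition eqmod_q2 (A B : {poly {poly int}}) : Prop :=
  exists h : {poly {poly int}}, A - B = h * (qv ^+ 2 - 1).

(* Main.v *)
Require Import Defs.
From mathcomp Require Import all_boot all_order all_algebra.
From mathcomp Require Import ring zify.
Set Implicit Arguments. Unset Strict Implicit. Unset Printing Implicit Defensive.
Import Order.TTheory GRing.Theory Num.Theory.
Local Open Scope ring_scope.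

Definition G (n k : nat) : int := (qbinom n k).[-1].

Lemma qbinom0 n : qbinom n 0 = 1. Proof. by case: n. Qed.
Lemma qbinom0S k : qbinom 0 k.+1 = 0. Proof. by []. Qed.
Lemma qbinomSS m j : qbinom m.+1 j.+1 = qbinom m j + 'X^(j.+1) * qbinom m j.+1.
Proof. by []. Qed.

Lemma qb1 n k : (qbinom n k).[1] = ('C(n,k))%:R.
Proof.
elim: n k => [|m IH] [|k]; rewrite ?qbinom0 ?qbinom0S ?hornerC ?bin0 //.
rewrite qbinomSS hornerD hornerM hornerXn expr1n mul1r !IH binS natrD addrC; reflexivity.
Qed.

Lemma G0 n : G n 0 = 1. Proof. by rewrite /G qbinom0 hornerC. Qed.
Lemma G0S k : G 0 k.+1 = 0. Proof. by rewrite /G qbinom0S hornerC. Qed.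
Lemma GSS m j : G m.+1 j.+1 = G m j + (-1)^+(j.+1) * G m j.+1.
Proof. by rewrite /G qbinomSS hornerD hornerM hornerXn. Qed.

Lemma G2 m k : G m.+2 k.+2 = G m k + G m k.+2.
Proof.
rewrite GSS [G m.+1 k.+1]GSS [G m.+1 k.+2]GSS !exprS.
have s2 : (-1) ^+ k * (-1) ^+ k = 1 :> int by rewrite -exprMn mulrNN mulr1 expr1n.
move: s2; set s := (-1) ^+ k => s2.
apply/eqP; rewrite -subr_eq0; apply/eqP.
transitivity ((s * s - 1) * G m k.+2); first ring.
by rewrite s2 subrr mul0r.
Qed.

Lemma Gm1 n0 k0 : G n0 k0 = 2 * (Los n0 k0)%:R - ('C(n0,k0))%:R.
Proof.
suff H : forall n, (forall k, G n k = 2 * (Los n k)%:R - ('C(n,k))%:R) /\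
                   (forall k, G n.+1 k = 2 * (Los n.+1 k)%:R - ('C(n.+1,k))%:R).
  by case: (H n0).
elim=> [|m [IH1 IH2]].
  split; case=> [|k]; rewrite ?G0 ?G0S //.
  rewrite GSS G0S mulr0 addr0; case: k => [|k]; rewrite ?G0 ?G0S //.
split=> // -[|[|k]].
- rewrite G0 /=. have := IH1 0%N. rewrite G0 /= bin0. rewrite !natz; lia.
- rewrite GSS G0 GSS G0 /= expr1 !bin1 addn0. have := IH1 0%N; have := IH1 1%N.
  rewrite G0 /= bin0 bin1. rewrite !natz; lia.
- rewrite G2 !IH1 /= !binS. rewrite !natz; lia.
Qed.

Lemma root2 (f : {poly int}) : f.[1] = 0 -> f.[-1] = 0 -> exists h, f = h * ('X^2 - 1).
Proof.
move=> h1 hm1. have /factor_theorem [g Hg] : root f 1 by apply/rootP.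
have : root g (-1).
  apply/rootP; move: hm1; rewrite Hg hornerM hornerD hornerN hornerX hornerC => /eqP.
  by rewrite mulf_eq0 => /orP [/eqP //|].
case/factor_theorem => h Hh; exists h.
rewrite Hg Hh -mulrA; congr (_ * _).
rewrite polyCN opprK; ring.
Qed.

Definition D (A : {poly {poly int}}) := exists h, A = h * (qv ^+ 2 - 1).

Lemma D0 : D 0. Proof. by exists 0; rewrite mul0r. Qed.
Lemma DD a b : D a -> D b -> D (a + b).
Proof. by move=> [h ->] [g ->]; exists (h + g); rewrite mulrDl. Qed.
Lemma DN a : D a -> D (- a).
Proof. by move=> [h ->]; exists (- h); rewrite mulNr. Qed.
Lemma DMl a b : D a -> D (b * a).
Proof. by move=> [h ->]; exists (b * h); rewrite mulrA. Qed.
Lemma Dsum (I : Type) (r : seq I) (P : pred I) (F : I -> {poly {poly int}}) :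
  (forall i, P i -> D (F i)) -> D (\sum_(i <- r | P i) F i).
Proof.
move=> H; elim/big_rec: _ => [|i x Pi Dx]; first exact: D0.
exact: DD (H _ Pi) Dx.
Qed.

Lemma qv2 : qv ^+ 2 - 1 = ('X^2 - 1)%:P.
Proof. by rewrite /qv rmorphB /= rmorphXn /= polyC1. Qed.

Lemma DC (f : {poly int}) c : f.[1] = 0 -> f.[-1] = 0 -> D (f%:P * c).
Proof.
move=> h1 h2; have [h ->] := root2 h1 h2.
by exists (h%:P * c); rewrite qv2 polyCM mulrAC.
Qed.

Lemma part1 n : eqmod_q2 (L_poly n + qv * Lbar_poly n) (r_poly n).
Proof.
change (D (L_poly n + qv * Lbar_poly n - r_poly n)).
pose f k : {poly int} := (Los n k)%:R + 'X * (Losbar n k)%:~R - qbinom n k.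
have -> : L_poly n + qv * Lbar_poly n - r_poly n = \sum_(k < n.+1) (f k)%:P * 'X^k.
  rewrite /L_poly /Lbar_poly /r_poly mulr_sumr -big_split -sumrB /=.
  apply: eq_bigr => k _; rewrite /f /qv !(rmorphD, rmorphB, rmorphM) /= rmorph_nat rmorph_int.
  ring.
apply: Dsum => k _; apply: DC.
  rewrite /f !hornerE qb1 -!polyC_natr !hornerC horner_int /Losbar intz. rewrite !natz; lia.
rewrite /f !hornerE -/(G n k) Gm1 -!polyC_natr !hornerC horner_int /Losbar intz. rewrite !natz; lia.
Qed.

Lemma cnt_sum n (P : pred {set 'I_n}) :
  \sum_(k < n.+1) (#|[set A : {set 'I_n} | (#|A| == k) && P A]|)%:R * ('X^k : {poly {poly int}})
  = \sum_(A | P A) 'X^#|A|.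
Proof.
rewrite (partition_big (fun A : {set 'I_n} => (inord #|A| : 'I_n.+1)) xpredT) //=.
apply: eq_bigr => k _.
have cA : forall A : {set 'I_n}, (#|A| < n.+1)%N.
  by move=> A; rewrite ltnS; apply: leq_trans (max_card _) _; rewrite card_ord.
have eqi : forall A : {set 'I_n}, (inord #|A| == k :> 'I_n.+1) = (#|A| == k).
  by move=> A; rewrite -val_eqE /= inordK.
rewrite mulr_natl -sumr_const.
apply: eq_big => A; first by rewrite inE eqi andbC.
by rewrite inE => /andP [/eqP ->].
Qed.

Lemma Dpar (s : nat) : D (qv ^+ odd s - qv ^+ s).
Proof.
rewrite -{2}(odd_double_half s) exprD -muln2 mulnC exprM.
set y := qv ^+ 2; set m := s./2.
have E : y ^+ m = (y - 1) * (\sum_(i < m) y ^+ i) + 1 by rewrite -subrX1 subrK.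
exists (- (qv ^+ odd s * \sum_(i < m) y ^+ i)); rewrite E; move: (\sum_(i < m) y ^+ i) => t; rewrite /y; move: (qv ^+ odd s) => a; ring.
Qed.

Lemma part2 n : eqmod_q2 (e_poly n + qv * o_poly n) (p_poly n).
Proof.
change (D (e_poly n + qv * o_poly n - p_poly n)).
pose S (A : {set 'I_n}) := (\sum_(i in A) i.+1)%N.
have He : e_poly n = \sum_(A | ~~ odd (S A)) 'X^#|A|.
  exact: (cnt_sum (fun A : {set 'I_n} => ~~ odd (S A))).
have Ho : o_poly n = \sum_(A | odd (S A)) 'X^#|A|.
  exact: (cnt_sum (fun A : {set 'I_n} => odd (S A))).
have Hp : p_poly n = \sum_(A : {set 'I_n}) qv ^+ (S A) * 'X^#|A|.
  rewrite /p_poly big_add1 /= big_mkord.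
  rewrite (eq_bigr (fun i : 'I_n => qv ^+ i.+1 * 'X + 1)); last by move=> i _; rewrite addrC.
  rewrite bigA_distr; apply: eq_big => [A|A _]; first by [].
  by rewrite -big_mkcond /= big_split /= prodrXr prodr_const.
have Heo : e_poly n + qv * o_poly n = \sum_(A : {set 'I_n}) qv ^+ (odd (S A)) * 'X^#|A|.
  rewrite (bigID (fun A => odd (S A))) /= [LHS]addrC He Ho mulr_sumr; congr (_ + _).
    by apply: eq_bigr => A ->; rewrite expr1.
  by apply: eq_bigr => A /negbTE ->; rewrite expr0 mul1r.
rewrite Heo Hp -sumrB; apply: Dsum => A _.
rewrite -mulrBl mulrC; apply: DMl; exact: Dpar.
Qed.

Theorem corollary4p2 (n : nat) :
  eqmod_q2 (L_poly n + qv * Lbar_poly n) (r_poly n) /\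
  eqmod_q2 (e_poly n + qv * o_poly n) (p_poly n).
Proof. split; [exact: part1 | exact: part2]. Qed.
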